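(* Let $p,p_1,\dots,p_n$ be distinct propositional variables ($n\geq 1$). Then $\bigwedge_{i=1}^n([0]p_i\to p_i)\to p\ \vdash_{\mathbf{GL}}\ Q^n(p)\leftrightarrow p$, i.e. the formula $Q^n(p)\leftrightarrow p$ is derivable from the axioms of $\mathbf{GL}$ and the hypothesis $\bigwedge_{i=1}^n([0]p_i\to p_i)\to p$ using modus ponens and necessitation.
   Context: $\mathbf{GL}$ is Gödel–Löb provability logic with the single modality $[0]$: classical tautologies, $[0](\phi\to\psi)\to([0]\phi\to[0]\psi)$, $[0]([0]\phi\to\phi)\to[0]\phi$, rules modus ponens and necessitation. For a finite set $\Gamma$, $\Gamma\vdash_{\mathbf{GL}}\phi$ means $\phi$ is derivable from the axioms and $\Gamma$ by modus ponens and necessitation (necessitation may be applied to anything derived, including hypotheses). Define $Q_1(p):=p$, $Q_{i+1}(p):=p\lor[0]Q_i(p)$, and $Q^n(p):=\bigwedge_{i=1}^n([0]Q_i(p)\to Q_i(p))$. *)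

(* Defs.v *)
From Stdlib Require Import List Arith.
Import ListNotations.

Inductive form : Type :=
| Bot : form
| Var : nat -> form
| Imp : form -> form -> form
| And : form -> form -> form
| Or  : form -> form -> form
| Box : form -> form.

Definition Top : form := Imp Bot Bot.
Definition Iff (a b : form) : form := And (Imp a b) (Imp b a).

(* Classical tautologies: formulas true under every boolean valuation in which
   variables and boxed formulas are treated as propositional atoms. *)
Fixpoint peval (v : form -> bool) (f : form) : bool :=
  match f with
  | Bot => false
  | Var n => v (Var n)
  | Imp a b => implb (peval v a) (peval v b)
  | And a b => andb (peval v a) (peval v b)
  | Or a b => orb (peval v a) (peval v b)
  | Box a => v (Box a)
  end.

Definition tautology (f : form) : Prop := forall v, peval v f = true.

(* Derivability in GL from a finite set of hypotheses Gamma, with modus ponens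
   and necessitation (applicable to anything derived, hypotheses included). *)
Inductive GLderiv (Gamma : list form) : form -> Prop :=
| d_taut : forall f, tautology f -> GLderiv Gamma f
| d_K : forall a b, GLderiv Gamma (Imp (Box (Imp a b)) (Imp (Box a) (Box b)))
| d_L : forall a, GLderiv Gamma (Imp (Box (Imp (Box a) a)) (Box a))
| d_hyp : forall f, In f Gamma -> GLderiv Gamma f
| d_mp : forall a b, GLderiv Gamma (Imp a b) -> GLderiv Gamma a -> GLderiv Gamma b
| d_nec : forall a, GLderiv Gamma a -> GLderiv Gamma (Box a).

Fixpoint bigAnd (l : list form) : form :=
  match l with
  | [] => Top
  | [a] => a
  | a :: l' => And a (bigAnd l')
  end.

(* Q_1(p) = p, Q_{i+1}(p) = p \/ [0] Q_i(p); Q 0 p := p is an unused default. *)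
Fixpoint Q (i : nat) (p : form) : form :=
  match i with
  | 0 => p
  | 1 => p
  | S k => Or p (Box (Q k p))
  end.

Definition Qn (n : nat) (p : form) : form :=
  bigAnd (map (fun i => Imp (Box (Q i p)) (Q i p)) (seq 1 n)).

(* Main.v *)
Require Import Defs.
From Stdlib Require Import List Arith Lia.
Import ListNotations.

Definition Ai (b : nat -> nat) i := Imp (Box (Var (b i))) (Var (b i)).
Definition Xi (b : nat -> nat) i := And (Var (b i)) (Box (Var (b i))).
Definition Pl b l := bigAnd (map (Xi b) l).

Ltac taut := let v := fresh "v" in try unfold Pl, Xi, Ai in *; intro v; cbn [peval Top Iff bigAnd];
  repeat (match goal with
          | |- context [peval v ?x] => destruct (peval v x)
          | |- context [v ?x] => destruct (v x) end); reflexivity.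

Lemma tmp1 {G a c} : GLderiv G a -> tautology (Imp a c) -> GLderiv G c.
Proof. intros H T. eapply d_mp; [apply d_taut; exact T|exact H]. Qed.

Lemma tmp2 {G a b c} : GLderiv G a -> GLderiv G b -> tautology (Imp a (Imp b c)) -> GLderiv G c.
Proof. intros H1 H2 T. eapply d_mp; [eapply d_mp; [apply d_taut; exact T|exact H1]|exact H2]. Qed.

Lemma tmp3 {G a b c d} : GLderiv G a -> GLderiv G b -> GLderiv G c ->
  tautology (Imp a (Imp b (Imp c d))) -> GLderiv G d.
Proof. intros H1 H2 H3 T. eapply d_mp; [|exact H3]. eapply tmp2; [exact H1|exact H2|exact T]. Qed.

Lemma box_mono {G a b} : GLderiv G (Imp a b) -> GLderiv G (Imp (Box a) (Box b)).
Proof. intro H. eapply d_mp; [apply d_K| apply d_nec; exact H]. Qed.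

Lemma box_and G a b : GLderiv G (Imp (Box a) (Imp (Box b) (Box (And a b)))).
Proof.
  assert (H1 : GLderiv G (Imp (Box a) (Box (Imp b (And a b))))).
  { apply box_mono. apply d_taut. taut. }
  apply (tmp2 H1 (d_K G b (And a b))). taut.
Qed.

Lemma four G a : GLderiv G (Imp (Box a) (Box (Box a))).
Proof.
  set (c := And a (Box a)).
  assert (H1 : GLderiv G (Imp (Box c) (Box a))) by (apply box_mono; apply d_taut; unfold c; taut).
  assert (H2 : GLderiv G (Imp a (Imp (Box c) c))) by (apply (tmp1 H1); unfold c; taut).
  assert (H3 : GLderiv G (Imp (Box c) (Box (Box a)))) by (apply box_mono; apply d_taut; unfold c; taut).
  pose proof (box_mono H2) as H4.
  apply (tmp3 H4 (d_L G c) H3). taut.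
Qed.

Lemma L_or_bigAnd G X Z l : (forall y, In y l -> GLderiv G (Imp X (Or Z y))) ->
  GLderiv G (Imp X (Or Z (bigAnd l))).
Proof.
  induction l as [|y l IH]; intro H.
  - apply d_taut. taut.
  - destruct l as [|z l'].
    + apply H. left; reflexivity.
    + change (bigAnd (y :: z :: l')) with (And y (bigAnd (z :: l'))).
      assert (H1 := H y (or_introl eq_refl)).
      assert (H2 : GLderiv G (Imp X (Or Z (bigAnd (z :: l'))))).
      { apply IH. intros w Hw. apply H. right; exact Hw. }
      apply (tmp2 H1 H2). taut.
Qed.

Lemma L_and_bigAnd G X l : (forall y, In y l -> GLderiv G (Imp X y)) ->
  GLderiv G (Imp X (bigAnd l)).
Proof.
  intro H. assert (H1 : GLderiv G (Imp X (Or Bot (bigAnd l)))).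
  { apply L_or_bigAnd. intros y Hy. apply (tmp1 (H y Hy)). taut. }
  apply (tmp1 H1). taut.
Qed.

Lemma L_proj G l y : In y l -> GLderiv G (Imp (bigAnd l) y).
Proof.
  induction l as [|z l IH]; intro Hy.
  - destruct Hy.
  - destruct l as [|w l'].
    + destruct Hy as [<-|[]]. apply d_taut; taut.
    + change (bigAnd (z :: w :: l')) with (And z (bigAnd (w :: l'))).
      destruct Hy as [<-|Hy].
      * apply d_taut; taut.
      * apply (tmp1 (IH Hy)). taut.
Qed.

Lemma bA_cons_r G z l : GLderiv G (Imp (And z (bigAnd l)) (bigAnd (z :: l))).
Proof.
  destruct l as [|w l'].
  - apply d_taut; taut.
  - change (bigAnd (z :: w :: l')) with (And z (bigAnd (w :: l'))). apply d_taut; taut.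
Qed.

Lemma L_bigAnd_box G l : (forall y, In y l -> GLderiv G (Imp y (Box y))) ->
  GLderiv G (Imp (bigAnd l) (Box (bigAnd l))).
Proof.
  induction l as [|z l IH]; intro H.
  - assert (H1 : GLderiv G (Box Top)) by (apply d_nec; apply d_taut; taut).
    apply (tmp1 H1). taut.
  - assert (H1 : GLderiv G (Imp (bigAnd l) (Box (bigAnd l)))).
    { apply IH. intros; apply H; right; assumption. }
    assert (H2 := H z (or_introl eq_refl)).
    assert (H3 := box_mono (bA_cons_r G z l)).
    assert (H4 : GLderiv G (Imp (bigAnd (z :: l)) (bigAnd l))).
    { apply L_and_bigAnd. intros y Hy. apply L_proj. right; exact Hy. }
    assert (H5 : GLderiv G (Imp (bigAnd (z :: l)) z)) by (apply L_proj; left; reflexivity).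
    assert (H6 : GLderiv G (Imp (bigAnd (z :: l)) (Box (bigAnd l)))) by (apply (tmp2 H4 H1); taut).
    assert (H7 : GLderiv G (Imp (bigAnd (z :: l)) (Box z))) by (apply (tmp2 H5 H2); taut).
    assert (H8 : GLderiv G (Imp (bigAnd (z :: l)) (Box (And z (bigAnd l))))).
    { apply (tmp3 H6 H7 (box_and G z (bigAnd l))); taut. }
    apply (tmp2 H8 H3); taut.
Qed.


Lemma Xi_box G b i : GLderiv G (Imp (Xi b i) (Box (Xi b i))).
Proof.
  unfold Xi.
  apply (tmp2 (four G (Var (b i))) (box_and G (Var (b i)) (Box (Var (b i))))). taut.
Qed.

Lemma claim n a b : forall k l,
  NoDup l -> incl l (seq 1 n) -> n <= length l + k ->
  GLderiv [Imp (bigAnd (map (Ai b) (seq 1 n))) (Var a)] (Imp (Pl b l) (Q (S k) (Var a))).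
Proof.
  set (G := [Imp (bigAnd (map (Ai b) (seq 1 n))) (Var a)]).
  assert (Hyp : GLderiv G (Imp (bigAnd (map (Ai b) (seq 1 n))) (Var a))) by (apply d_hyp; left; reflexivity).
  assert (gen : forall Z l, (forall i, In i (seq 1 n) -> GLderiv G (Imp (Pl b l) (Or Z (Ai b i)))) ->
     GLderiv G (Imp (Pl b l) (Or Z (Var a)))).
  { intros Z l H. assert (H1 : GLderiv G (Imp (Pl b l) (Or Z (bigAnd (map (Ai b) (seq 1 n)))))).
    { apply L_or_bigAnd. intros y Hy. apply in_map_iff in Hy. destruct Hy as [i [<- Hi]]. auto. }
    apply (tmp2 H1 Hyp). taut. }
  assert (inl : forall l i Z, In i l -> GLderiv G (Imp (Pl b l) (Or Z (Ai b i)))).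
  { intros l i Z Hi. assert (H := L_proj G (map (Xi b) l) (Xi b i) (in_map _ _ _ Hi)).
    apply (tmp1 H). unfold Xi, Ai. taut. }
  induction k as [|k IH]; intros l Hnd Hinc Hlen.
  - assert (H := gen Bot l). cbn [Q].
    assert (H' : GLderiv G (Imp (Pl b l) (Or Bot (Var a)))).
    { apply H. intros i Hi. destruct (in_dec Nat.eq_dec i l) as [Hil|Hil].
      - apply inl; exact Hil.
      - exfalso. assert (Hl : length (i :: l) <= length (seq 1 n)).
        { apply NoDup_incl_length. constructor; assumption.
          intros y [<-|Hy]; auto. }
        rewrite length_seq in Hl. simpl in Hl. lia. }
    apply (tmp1 H'). taut.
  - change (Q (S (S k)) (Var a)) with (Or (Var a) (Box (Q (S k) (Var a)))).
    assert (H' : GLderiv G (Imp (Pl b l) (Or (Box (Q (S k) (Var a))) (Var a)))).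
    { apply gen. intros i Hi. destruct (in_dec Nat.eq_dec i l) as [Hil|Hil].
      - apply inl; exact Hil.
      - assert (IH' := IH (i :: l)).
        assert (H1 : GLderiv G (Imp (Pl b (i :: l)) (Q (S k) (Var a)))).
        { apply IH'. constructor; assumption. intros y [<-|Hy]; auto. simpl; lia. }
        assert (H2 := box_mono H1).
        assert (H3 := box_mono (bA_cons_r G (Xi b i) (map (Xi b) l))).
        assert (H4 : GLderiv G (Imp (Pl b l) (Box (Pl b l)))).
        { apply L_bigAnd_box. intros y Hy. apply in_map_iff in Hy. destruct Hy as [j [<- _]].
          apply Xi_box. }
        assert (H5 := Xi_box G b i).
        assert (H6 := box_and G (Xi b i) (Pl b l)).
        assert (H7 : GLderiv G (Imp (Pl b l) (Imp (Box (Var (b i))) (Box (Q (S k) (Var a)))))).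
        { unfold Pl in *. simpl map in H2.
          assert (H8 : GLderiv G (Imp (Box (Var (b i))) (Box (Xi b i)))).
          { apply (tmp2 (four G (Var (b i))) (box_and G (Var (b i)) (Box (Var (b i))))). unfold Xi. taut. }
          assert (H9 : GLderiv G (Imp (bigAnd (map (Xi b) l)) (Imp (Box (Var (b i))) (Box (And (Xi b i) (bigAnd (map (Xi b) l))))))).
          { apply (tmp3 H4 H8 H6). taut. }
          apply (tmp3 H9 H3 H2). taut. }
        apply (tmp1 H7). unfold Ai. taut. }
    apply (tmp1 H'). taut.
Qed.

Lemma Q_from_p G p i : 1 <= i -> GLderiv G (Imp p (Q i p)).
Proof.
  intro Hi. destruct i as [|[|i]]; [lia| |]; apply d_taut; cbn [Q]; taut.
Qed.

Lemma down G n p : forall j, 1 <= j <= n ->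
  GLderiv G (Imp (Qn n p) (Imp (Imp p Bot) (Imp (Box (Q j p)) Bot))).
Proof.
  assert (pr : forall j, 1 <= j <= n -> GLderiv G (Imp (Qn n p) (Imp (Box (Q j p)) (Q j p)))).
  { intros j Hj. apply L_proj. apply in_map_iff. exists j. split; [reflexivity|].
    apply in_seq. lia. }
  intros j Hj. destruct j as [|j]; [lia|].
  induction j as [|j IH].
  - assert (H := pr 1 Hj). cbn [Q] in *. apply (tmp1 H). taut.
  - assert (H := pr (S (S j)) Hj). 
    change (Q (S (S j)) p) with (Or p (Box (Q (S j) p))) in H |- *.
    assert (H2 : GLderiv G (Imp (Qn n p) (Imp (Imp p Bot) (Imp (Box (Q (S j) p)) Bot)))) by (apply IH; lia).
    apply (tmp2 H H2). taut.
Qed.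

Theorem mainTheorem11 (n : nat) (a : nat) (b : nat -> nat)
  (hn : 1 <= n)
  (hb_inj : forall i j, 1 <= i <= n -> 1 <= j <= n -> b i = b j -> i = j)
  (ha : forall i, 1 <= i <= n -> b i <> a) :
  GLderiv
    [Imp (bigAnd (map (fun i => Imp (Box (Var (b i))) (Var (b i))) (seq 1 n))) (Var a)]
    (Iff (Qn n (Var a)) (Var a)).
Proof.
  change (fun i => Imp (Box (Var (b i))) (Var (b i))) with (Ai b).
  set (G := [Imp (bigAnd (map (Ai b) (seq 1 n))) (Var a)]).
  assert (H1 : GLderiv G (Imp (Pl b []) (Q (S n) (Var a)))).
  { apply claim. constructor. intros y []. simpl; lia. }
  destruct n as [|m]; [lia|].
  change (Q (S (S m)) (Var a)) with (Or (Var a) (Box (Q (S m) (Var a)))) in H1.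
  assert (H2 : GLderiv G (Imp (Qn (S m) (Var a)) (Imp (Imp (Var a) Bot) (Imp (Box (Q (S m) (Var a))) Bot)))).
  { apply down; lia. }
  assert (H3 : GLderiv G (Imp (Var a) (Qn (S m) (Var a)))).
  { apply L_and_bigAnd. intros y Hy. apply in_map_iff in Hy. destruct Hy as [j [<- Hj]].
    apply in_seq in Hj. assert (H := Q_from_p G (Var a) j ltac:(lia)).
    apply (tmp1 H). taut. }
  unfold Pl in H1; cbn [map bigAnd] in H1.
  apply (tmp3 H1 H2 H3). taut.
Qed.
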